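(* Let $Z$ be an $\omega$-saturated $Z$-group, $G$ a definable group, and $f:(\bigcap_{n\ge1}nZ)^r\to G$ a type-definable group morphism. Let $\Sigma$ and $X\subseteq S^r(\emptyset)$ be as defined below. Suppose there exist a finite tuple $t$ from $Z$ and a type $p\in X$ with $p\vdash x\in(\bigcap_nnZ)^r$ such that $f$ is injective on the set of realizations of $p\cup\Sigma_t$. Then $f$ is injective.
   Context: A $Z$-group is a model of the complete theory of $(\mathbb{Z},+,<)$. $\Sigma(x,y)$, with $x\in Z^r$, $y\in Z$, is the partial type over $\emptyset$ with $(a,b)\models\Sigma$ iff for every nonzero $m\in\mathbb{Z}^r$ and every $k\in\mathbb{Z}_{>0}$, $k\max(|b|,1)<|m_1a_1+\dots+m_ra_r|$. For a finite tuple $b=(b_1,\dots,b_l)$, $\Sigma_b(x)=\bigcup_i\Sigma(x,b_i)$. $X\subseteq S^r(\emptyset)$ is the set of complete types $p$ over $\emptyset$ such that for every finite tuple $t$ there is $a\models p\cup\Sigma_t$. $\bigcap_nnZ$ is the (type-definable) subgroup of divisible elements. *)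

(* Defs.v *)
From Stdlib Require Import ZArith List Arith.
Import ListNotations.
Set Implicit Arguments.

Inductive term : Type :=
| tvar : nat -> term
| tadd : term -> term -> term.

Inductive form : Type :=
| feq : term -> term -> form
| flt : term -> term -> form
| fneg : form -> form
| fand : form -> form -> form
| fex : nat -> form -> form.

Fixpoint occurs_free_t (v : nat) (t : term) : Prop :=
  match t with
  | tvar i => i = v
  | tadd a b => occurs_free_t v a \/ occurs_free_t v b
  end.

Fixpoint occurs_free (v : nat) (phi : form) : Prop :=
  match phi with
  | feq a b | flt a b => occurs_free_t v a \/ occurs_free_t v b
  | fneg psi => occurs_free v psi
  | fand psi chi => occurs_free v psi \/ occurs_free v chi
  | fex w psi => v <> w /\ occurs_free v psi
  end.

Definition sentence (phi : form) : Prop := forall v, ~ occurs_free v phi.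

Definition fv_lt (r : nat) (phi : form) : Prop :=
  forall v, occurs_free v phi -> v < r.

(** Besides the language symbols (+,<), the record carries
    0, unary minus and 1; these are required (in [Zgroup]) to be the
    uniquely determined neutral element, inverse and least positive element,
    so they add no data.  They are NOT used by the satisfaction relation. *)
Record Str : Type := {
  car :> Type;
  sadd : car -> car -> car;
  sltb : car -> car -> bool;
  szero : car;
  sopp : car -> car;
  sone : car }.

Section Sem.
Variable M : Str.

Fixpoint eval (env : nat -> M) (t : term) : M :=
  match t with
  | tvar i => env i
  | tadd a b => sadd M (eval env a) (eval env b)
  end.

Definition upd (env : nat -> M) (n : nat) (a : M) : nat -> M :=
  fun i => if Nat.eqb i n then a else env i.

Fixpoint sat (env : nat -> M) (phi : form) : Prop :=
  match phi with
  | feq a b => eval env a = eval env b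
  | flt a b => sltb M (eval env a) (eval env b) = true
  | fneg psi => ~ sat env psi
  | fand psi chi => sat env psi /\ sat env chi
  | fex n psi => exists a : M, sat (upd env n a) psi
  end.

(** environment given by a finite tuple; further variables are sent to 0
    (which is 0-definable, so this adds no parameters) *)
Definition env_of (l : list M) : nat -> M := fun i => nth i l (szero M).

Fixpoint nmul (k : nat) (x : M) : M :=
  match k with
  | O => szero M
  | S k' => sadd M (nmul k' x) x
  end.

Definition zmul (z : Z) (x : M) : M :=
  match z with
  | Z0 => szero M
  | Zpos p => nmul (Pos.to_nat p) x
  | Zneg p => sopp M (nmul (Pos.to_nat p) x)
  end.

Definition absM (x : M) : M := if sltb M x (szero M) then sopp M x else x.
Definition maxM (x y : M) : M := if sltb M x y then y else x.

Fixpoint lincomb (m : list Z) (a : list M) : M :=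
  match m, a with
  | z :: m', x :: a' => sadd M (zmul z x) (lincomb m' a')
  | _, _ => szero M
  end.

Definition addv (a b : list M) : list M :=
  map (fun p => sadd M (fst p) (snd p)) (combine a b).

Definition definable (n : nat) (S : list M -> Prop) : Prop :=
  (forall l, S l -> length l = n) /\
  exists (phi : form) (B : list M),
    forall l, length l = n -> (S l <-> sat (env_of (l ++ B)) phi).

Definition type_definable (n : nat) (S : list M -> Prop) : Prop :=
  (forall l, S l -> length l = n) /\
  exists (Phi : form -> Prop) (B : list M),
    forall l, length l = n ->
      (S l <-> forall phi, Phi phi -> sat (env_of (l ++ B)) phi).

(** omega-saturation: every finitely satisfiable 1-type over a finite
    parameter set B is realized (x is variable 0, B occupies 1..|B|) *)
Definition omega_saturated : Prop :=
  forall (B : list M) (Phi : form -> Prop),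
    (forall L : list form, (forall phi, In phi L -> Phi phi) ->
       exists a : M, forall phi, In phi L -> sat (env_of (a :: B)) phi) ->
    exists a : M, forall phi, Phi phi -> sat (env_of (a :: B)) phi.

Definition definable_group (n : nat) (G : list M -> Prop)
    (mul : list M -> list M -> list M) : Prop :=
  definable n G /\
  definable (3 * n) (fun l => exists x y, G x /\ G y /\ l = x ++ y ++ mul x y) /\
  (forall x y, G x -> G y -> G (mul x y)) /\
  (forall x y z, G x -> G y -> G z -> mul (mul x y) z = mul x (mul y z)) /\
  (exists e, G e /\ (forall x, G x -> mul e x = x /\ mul x e = x) /\
     (forall x, G x -> exists y, G y /\ mul x y = e /\ mul y x = e)).

(** * The divisible subgroup  bigcap_n nZ  and its r-th power *)
Definition divisibleM (x : M) : Prop :=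
  forall k : nat, 1 <= k -> exists y : M, nmul k y = x.

Definition divpow (r : nat) (a : list M) : Prop :=
  length a = r /\ Forall divisibleM a.

Definition tdef_morphism (r n : nat) (G : list M -> Prop)
    (mul : list M -> list M -> list M) (f : list M -> list M) : Prop :=
  (forall a, divpow r a -> G (f a)) /\
  (forall a b, divpow r a -> divpow r b -> f (addv a b) = mul (f a) (f b)) /\
  type_definable (r + n) (fun l => exists a, divpow r a /\ l = a ++ f a).

Definition Sigma (a : list M) (b : M) : Prop :=
  forall m : list Z, length m = length a -> (exists z, In z m /\ z <> 0%Z) ->
  forall k : nat, 1 <= k ->
    sltb M (nmul k (maxM (absM b) (sone M))) (absM (lincomb m a)) = true.

Definition Sigma_t (a : list M) (t : list M) : Prop :=
  forall b, In b t -> Sigma a b.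

Definition realizes (p : form -> Prop) (a : list M) : Prop :=
  forall phi, p phi -> sat (env_of a) phi.

End Sem.

Definition Zstd : Str :=
  {| car := Z; sadd := Z.add; sltb := Z.ltb; szero := 0%Z; sopp := Z.opp;
     sone := 1%Z |}.

Definition models_ThZ (N : Str) : Prop :=
  forall phi, sentence phi -> sat Zstd (fun _ => 0%Z) phi ->
              sat N (fun _ => szero N) phi.

Definition Zgroup (M : Str) : Prop :=
  models_ThZ M /\
  (forall x : M, sadd M x (szero M) = x) /\
  (forall x : M, sadd M x (sopp M x) = szero M) /\
  sltb M (szero M) (sone M) = true /\
  (forall x : M, sltb M (szero M) x = true -> sltb M x (sone M) = false).

Definition complete_type (r : nat) (p : form -> Prop) : Prop :=
  (forall phi, p phi -> fv_lt r phi) /\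
  (forall phi, fv_lt r phi -> p phi \/ p (fneg phi)) /\
  (forall L : list form, (forall phi, In phi L -> p phi) ->
     exists a : list Z, length a = r /\
       forall phi, In phi L -> sat Zstd (env_of Zstd a) phi).

Definition entails (p : form -> Prop) (psi : form) : Prop :=
  forall N : Str, models_ThZ N -> forall env : nat -> N,
    (forall phi, p phi -> sat N env phi) -> sat N env psi.

(** term  t + ... + t  (k+1 copies) *)
Fixpoint tmulS (k : nat) (t : term) : term :=
  match k with
  | O => t
  | S k' => tadd (tmulS k' t) t
  end.

(** formula "x_i in (k+1)Z" *)
Definition div_form (k i : nat) : form :=
  fex (S i) (feq (tmulS k (tvar (S i))) (tvar i)).

Definition entails_divpow (r : nat) (p : form -> Prop) : Prop :=
  forall i k, i < r -> entails p (div_form k i).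

Definition inX (M : Str) (r : nat) (p : form -> Prop) : Prop :=
  complete_type r p /\
  forall t : list M, exists a : list M,
    length a = r /\ realizes M p a /\ Sigma_t M a t.

(* Main.v *)
Require Import Defs.
From Stdlib Require Import ZArith List Arith Lia Classical.
Import ListNotations.

Section Alg.
Variable M : Str.
Local Notation "x ⊕ y" := (sadd M x y) (at level 50, left associativity).
Local Notation "⊖ x" := (sopp M x) (at level 35, right associativity).
Local Notation O0 := (szero M).
Local Notation lt x y := (sltb M x y = true).
Local Notation le x y := (sltb M y x = false).

Hypothesis addA : forall x y z : M, x ⊕ y ⊕ z = x ⊕ (y ⊕ z).
Hypothesis addC : forall x y : M, x ⊕ y = y ⊕ x.
Hypothesis add0 : forall x : M, x ⊕ O0 = x.
Hypothesis addN : forall x : M, x ⊕ ⊖ x = O0.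
Hypothesis lt_irr : forall x : M, sltb M x x = false.
Hypothesis lt_trans : forall x y z : M, lt x y -> lt y z -> lt x z.
Hypothesis lt_total : forall x y : M, lt x y \/ x = y \/ lt y x.
Hypothesis lt_addr : forall x y z : M, lt x y -> lt (x ⊕ z) (y ⊕ z).

Lemma add0l x : O0 ⊕ x = x. Proof. rewrite addC; apply add0. Qed.
Lemma addNl x : ⊖ x ⊕ x = O0. Proof. rewrite addC; apply addN. Qed.
Lemma addCA x y z : x ⊕ (y ⊕ z) = y ⊕ (x ⊕ z).
Proof. rewrite <- !addA, (addC x y); reflexivity. Qed.
Lemma addACA a b c d : a ⊕ b ⊕ (c ⊕ d) = a ⊕ c ⊕ (b ⊕ d).
Proof. rewrite !addA, (addCA b c d); reflexivity. Qed.
Lemma addKr x y : x ⊕ y ⊕ ⊖ y = x. Proof. rewrite addA, addN, add0; auto. Qed.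
Lemma addKl x y : ⊖ x ⊕ (x ⊕ y) = y. Proof. rewrite <- addA, addNl, add0l; auto. Qed.
Lemma add_cancel x y z : x ⊕ z = y ⊕ z -> x = y.
Proof. intro H. rewrite <- (addKr x z), H, addKr. auto. Qed.
Lemma opp_unique x y : x ⊕ y = O0 -> y = ⊖ x.
Proof. intro H. apply (add_cancel _ _ x). rewrite addC, H, addNl. auto. Qed.
Lemma oppK x : ⊖ ⊖ x = x.
Proof. symmetry. apply opp_unique. apply addNl. Qed.
Lemma opp0 : ⊖ O0 = O0.
Proof. symmetry; apply opp_unique; apply add0. Qed.
Lemma oppD x y : ⊖ (x ⊕ y) = ⊖ x ⊕ ⊖ y.
Proof. symmetry; apply opp_unique. rewrite addACA, !addN, add0. auto. Qed.
Lemma subr_eq0 x y : x ⊕ ⊖ y = O0 -> x = y.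
Proof. intro H. apply opp_unique in H. rewrite <- (oppK x), <- H, oppK. auto. Qed.

Lemma nmulD k x y : nmul M k (x ⊕ y) = nmul M k x ⊕ nmul M k y.
Proof. induction k; simpl. rewrite add0; auto. rewrite IHk, addACA; auto. Qed.
Lemma nmul_plus a b x : nmul M (a + b) x = nmul M a x ⊕ nmul M b x.
Proof. induction b; simpl. rewrite Nat.add_0_r, add0; auto.
  rewrite Nat.add_succ_r; simpl. rewrite IHb, addA; auto. Qed.
Lemma nmul_mult a b x : nmul M (a * b) x = nmul M a (nmul M b x).
Proof. induction a; simpl; auto. rewrite nmul_plus, IHa, addC; auto. Qed.
Lemma nmulN k x : nmul M k (⊖ x) = ⊖ nmul M k x.
Proof. induction k; simpl. rewrite opp0; auto. rewrite IHk, oppD; auto. Qed.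
Lemma nmul0 k : nmul M k O0 = O0.
Proof. induction k; simpl; auto. rewrite IHk, add0; auto. Qed.
Lemma nmul1 x : nmul M 1 x = x. Proof. simpl; apply add0l. Qed.

Lemma zmul_succ z x : zmul M (Z.succ z) x = zmul M z x ⊕ x.
Proof.
  destruct z as [|p|p].
  - simpl. rewrite add0l; auto.
  - unfold Z.succ; simpl. rewrite Pos.add_1_r, Pos2Nat.inj_succ. reflexivity.
  - destruct (Pos.eq_dec p 1) as [->|Hp].
    + simpl. rewrite add0l, addNl. reflexivity.
    + replace (Z.succ (Z.neg p)) with (Z.neg (Pos.pred p)).
      * simpl. rewrite <- (Pos.succ_pred p) at 2 by auto.
        rewrite Pos2Nat.inj_succ; simpl. rewrite oppD, addA, addNl, add0. reflexivity.
      * rewrite <- (Pos.succ_pred p) at 2 by auto. rewrite <- Pos.add_1_r.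
        rewrite <- Pos2Z.add_neg_neg. lia.
Qed.
Lemma zmul_pred z x : zmul M (Z.pred z) x = zmul M z x ⊕ ⊖ x.
Proof. rewrite <- (Z.succ_pred z) at 2. rewrite zmul_succ, addKr. auto. Qed.
Lemma zmul0 x : zmul M 0 x = O0. Proof. reflexivity. Qed.
Lemma zmul1 x : zmul M 1 x = x. Proof. apply nmul1. Qed.
Lemma zmulDl a b x : zmul M (a + b) x = zmul M a x ⊕ zmul M b x.
Proof.
  induction b using Z.peano_ind.
  - rewrite Z.add_0_r, zmul0, add0; auto.
  - rewrite Z.add_succ_r, !zmul_succ, IHb, addA; auto.
  - rewrite Z.add_pred_r, !zmul_pred, IHb, addA; auto.
Qed.
Lemma zmulDr z x y : zmul M z (x ⊕ y) = zmul M z x ⊕ zmul M z y.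
Proof.
  induction z using Z.peano_ind.
  - rewrite !zmul0, add0; auto.
  - rewrite !zmul_succ, IHz, addACA; auto.
  - rewrite !zmul_pred, IHz, oppD, addACA; auto.
Qed.
Lemma zmulNl z x : zmul M (- z) x = ⊖ zmul M z x.
Proof. apply opp_unique. rewrite <- zmulDl, Z.add_opp_diag_r. auto. Qed.
Lemma zmulNr z x : zmul M z (⊖ x) = ⊖ zmul M z x.
Proof. apply opp_unique. rewrite <- zmulDr, addN. destruct z; simpl; auto using nmul0.
  rewrite nmul0, opp0; auto. Qed.
Lemma zmul_r0 z : zmul M z O0 = O0.
Proof. destruct z; simpl; auto using nmul0. rewrite nmul0, opp0; auto. Qed.
Lemma zmul_mul a b x : zmul M (a * b) x = zmul M a (zmul M b x).
Proof.
  induction a using Z.peano_ind.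
  - reflexivity.
  - rewrite Z.mul_succ_l, zmulDl, zmul_succ, IHa; auto.
  - rewrite Z.mul_pred_l, <- Z.add_opp_r, zmulDl, zmulNl, zmul_pred, IHa. auto.
Qed.
Lemma zmul_m1 x : zmul M (-1) x = ⊖ x.
Proof. change (⊖ nmul M 1 x = ⊖ x). rewrite nmul1; auto. Qed.
Lemma zmul_comm a b x : zmul M a (zmul M b x) = zmul M b (zmul M a x).
Proof. rewrite <- !zmul_mul, Z.mul_comm; auto. Qed.
Lemma zmul_of_nat k x : zmul M (Z.of_nat k) x = nmul M k x.
Proof. destruct k; simpl; auto. rewrite SuccNat2Pos.id_succ. auto. Qed.

Lemma lt_le x y : lt x y -> le x y.
Proof. simpl; intro H. destruct (sltb M y x) eqn:E; auto.
  pose proof (lt_trans _ _ _ H E). rewrite lt_irr in H0; discriminate. Qed.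
Lemma le_refl x : le x x. Proof. simpl; apply lt_irr. Qed.
Lemma not_le x y : sltb M y x = true -> ~ (sltb M y x = false).
Proof. congruence. Qed.
Lemma le_lt_trans x y z : le x y -> lt y z -> lt x z.
Proof. simpl; intros H1 H2. destruct (lt_total x z) as [H|[H|H]]; auto.
  - subst. congruence.
  - pose proof (lt_trans _ _ _ H2 H). congruence. Qed.
Lemma lt_le_trans x y z : lt x y -> le y z -> lt x z.
Proof. simpl; intros H1 H2. destruct (lt_total x z) as [H|[H|H]]; auto.
  - subst. congruence.
  - pose proof (lt_trans _ _ _ H H1). congruence. Qed.
Lemma le_trans x y z : le x y -> le y z -> le x z.
Proof. simpl; intros H1 H2. destruct (sltb M z x) eqn:E; auto.
  pose proof (le_lt_trans _ _ _ H2 E). congruence. Qed.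
Lemma le_antisym x y : le x y -> le y x -> x = y.
Proof. simpl; intros. destruct (lt_total x y) as [H1|[H1|H1]]; congruence. Qed.
Lemma lt_addl x y z : lt x y -> lt (z ⊕ x) (z ⊕ y).
Proof. intro H. rewrite (addC z x), (addC z y). apply lt_addr; auto. Qed.
Lemma lt_addr_rev x y z : lt (x ⊕ z) (y ⊕ z) -> lt x y.
Proof. intro H. apply (lt_addr _ _ (⊖ z)) in H. rewrite !addKr in H. auto. Qed.
Lemma le_addr x y z : le x y -> le (x ⊕ z) (y ⊕ z).
Proof. simpl; intro H. destruct (sltb M (y ⊕ z) (x ⊕ z)) eqn:E; auto.
  apply lt_addr_rev in E. congruence. Qed.
Lemma le_addl x y z : le x y -> le (z ⊕ x) (z ⊕ y).
Proof. intro H. rewrite (addC z x), (addC z y). apply le_addr; auto. Qed.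
Lemma le_add a b c d : le a b -> le c d -> le (a ⊕ c) (b ⊕ d).
Proof. intros H1 H2. apply le_trans with (b ⊕ c). apply le_addr; auto. apply le_addl; auto. Qed.
Lemma lt_opp x y : lt x y -> lt (⊖ y) (⊖ x).
Proof. intro H. apply (lt_addr _ _ (⊖ x ⊕ ⊖ y)) in H.
  replace (x ⊕ (⊖ x ⊕ ⊖ y)) with (⊖ y) in H by (rewrite <- addA, addN, add0l; auto).
  replace (y ⊕ (⊖ x ⊕ ⊖ y)) with (⊖ x) in H by (rewrite addCA, addN, add0; auto). auto. Qed.
Lemma le_opp x y : le x y -> le (⊖ y) (⊖ x).
Proof. simpl; intro H. destruct (sltb M (⊖ x) (⊖ y)) eqn:E; auto.
  apply lt_opp in E. rewrite !oppK in E. congruence. Qed.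
Lemma le_total x y : le x y \/ lt y x.
Proof. simpl. destruct (sltb M y x); auto. Qed.

Lemma abs_pos x : le O0 x -> absM M x = x.
Proof. simpl; intro H. unfold absM. rewrite H. auto. Qed.
Lemma abs_neg x : lt x O0 -> absM M x = ⊖ x.
Proof. simpl; intro H. unfold absM. rewrite H. auto. Qed.
Lemma abs_ge0 x : le O0 (absM M x).
Proof. destruct (le_total O0 x) as [H|H].
  - rewrite abs_pos; auto.
  - rewrite abs_neg; auto. apply lt_le. apply lt_opp in H. rewrite opp0 in H. auto. Qed.
Lemma abs_opp x : absM M (⊖ x) = absM M x.
Proof. destruct (lt_total x O0) as [H|[H|H]].
  - rewrite (abs_neg x) by auto. apply abs_pos. apply lt_le. apply lt_opp in H. rewrite opp0 in H; auto.
  - subst. rewrite opp0; auto.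
  - rewrite (abs_pos x) by (apply lt_le; auto). rewrite abs_neg. apply oppK.
    apply lt_opp in H. rewrite opp0 in H; auto. Qed.
Lemma le_abs x : le x (absM M x).
Proof. destruct (le_total O0 x) as [H|H].
  - rewrite abs_pos; auto.
  - rewrite abs_neg; auto. apply lt_le. apply lt_trans with O0; auto.
    apply lt_opp in H. rewrite opp0 in H. auto. Qed.
Lemma le_abs_opp x : le (⊖ x) (absM M x).
Proof. rewrite <- abs_opp. apply le_abs. Qed.
Lemma abs_triangle x y : le (absM M (x ⊕ y)) (absM M x ⊕ absM M y).
Proof. destruct (le_total O0 (x ⊕ y)) as [H|H].
  - rewrite (abs_pos (x ⊕ y)); auto. apply le_add; apply le_abs.
  - rewrite (abs_neg (x ⊕ y)); auto. rewrite oppD. apply le_add; apply le_abs_opp. Qed.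
Lemma abs_eq0 x : absM M x = O0 -> x = O0.
Proof. destruct (le_total O0 x) as [H|H].
  - rewrite abs_pos; auto.
  - rewrite abs_neg; auto. intro E. rewrite <- (oppK x), E, opp0; auto. Qed.
Lemma nmul_ge0 k x : le O0 x -> le O0 (nmul M k x).
Proof. intro H. induction k; simpl. apply le_refl.
  rewrite <- (add0 O0). apply le_add; auto. Qed.
Lemma nmul_ge k x : (1 <= k)%nat -> le O0 x -> le x (nmul M k x).
Proof. intros Hk H. destruct k. lia. simpl. apply le_trans with (O0 ⊕ x).
  rewrite add0l; apply le_refl. apply le_addr. apply nmul_ge0; auto. Qed.
Lemma nmul_mono k x y : le x y -> le (nmul M k x) (nmul M k y).
Proof. intro H. induction k; simpl. apply le_refl. apply le_add; auto. Qed.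
Lemma abs_nmul k x : absM M (nmul M k x) = nmul M k (absM M x).
Proof. destruct (le_total O0 x) as [H|H].
  - rewrite !abs_pos; auto. apply nmul_ge0; auto.
  - rewrite (abs_neg x) by auto. rewrite <- (oppK x) at 1. rewrite nmulN, abs_opp.
    apply abs_pos. apply nmul_ge0. apply lt_le. apply lt_opp in H. rewrite opp0 in H. auto. Qed.
Lemma le_abs_zmul n x : n <> 0%Z -> le (absM M x) (absM M (zmul M n x)).
Proof. intro Hn. destruct n as [|p|p]; [congruence| |]; simpl.
  - rewrite abs_nmul. apply nmul_ge. lia. apply abs_ge0.
  - rewrite abs_opp, abs_nmul. apply nmul_ge. lia. apply abs_ge0. Qed.
Lemma zmul_torsion n y : n <> 0%Z -> zmul M n y = O0 -> y = O0.
Proof. intros Hn H. pose proof (le_abs_zmul n y Hn). rewrite H in H0.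
  rewrite abs_pos in H0 by apply le_refl. apply abs_eq0. apply le_antisym; auto. apply abs_ge0. Qed.
Lemma nmul_cancel k a b : (1 <= k)%nat -> nmul M k a = nmul M k b -> a = b.
Proof. intros Hk H. apply subr_eq0. apply (zmul_torsion (Z.of_nat k)). lia.
  rewrite zmulDr, zmulNr, !zmul_of_nat, H. apply addN. Qed.

Fixpoint lin (L : list (nat * Z)) (f : nat -> M) : M :=
  match L with
  | [] => O0
  | p :: L' => zmul M (snd p) (f (fst p)) ⊕ lin L' f
  end.
Definition dropv (v : nat) (L : list (nat * Z)) :=
  filter (fun p => negb (Nat.eqb (fst p) v)) L.
Fixpoint coefv (v : nat) (L : list (nat * Z)) : Z :=
  match L with
  | [] => 0%Z
  | p :: L' => if Nat.eqb (fst p) v then (snd p + coefv v L')%Z else coefv v L'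
  end.
Definition scaleL (z : Z) (L : list (nat * Z)) := map (fun p => (fst p, (z * snd p)%Z)) L.
Fixpoint tlin (t : term) : list (nat * Z) :=
  match t with
  | tvar i => [(i, 1%Z)]
  | tadd a b => tlin a ++ tlin b
  end.

Lemma lin_app L1 L2 f : lin (L1 ++ L2) f = lin L1 f ⊕ lin L2 f.
Proof. induction L1; simpl. rewrite add0l; auto. rewrite IHL1, addA; auto. Qed.
Lemma lin_scale z L f : lin (scaleL z L) f = zmul M z (lin L f).
Proof. induction L; simpl. rewrite zmul_r0; auto. rewrite IHL, zmulDr, zmul_mul; auto. Qed.
Lemma lin_ext L f g : (forall i, f i = g i) -> lin L f = lin L g.
Proof. intro E. induction L; simpl; auto. rewrite IHL, E; auto. Qed.
Lemma lin_envD L f g : lin L (fun i => f i ⊕ g i) = lin L f ⊕ lin L g.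
Proof. induction L; simpl. rewrite add0; auto. rewrite IHL, zmulDr, addACA; auto. Qed.
Lemma lin_envN L f : lin L (fun i => ⊖ f i) = ⊖ lin L f.
Proof. induction L; simpl. rewrite opp0; auto. rewrite IHL, zmulNr, oppD; auto. Qed.
Lemma lin_upd L f v u : lin L (upd M f v u) = lin (dropv v L) f ⊕ zmul M (coefv v L) u.
Proof. induction L as [|[j z] L IH]; simpl. rewrite add0; auto.
  unfold upd at 1. destruct (Nat.eqb j v) eqn:E; simpl.
  - rewrite IH, zmulDl. rewrite addCA. auto.
  - rewrite IH, addA; auto. Qed.
Lemma eval_lin t f : eval M f t = lin (tlin t) f.
Proof. induction t; cbn [eval tlin lin fst snd app]. rewrite add0, zmul1; auto. rewrite lin_app, IHt1, IHt2; auto. Qed.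

Lemma div_zero : divisibleM M O0.
Proof. intros k _. exists O0. apply nmul0. Qed.
Lemma div_add x y : divisibleM M x -> divisibleM M y -> divisibleM M (x ⊕ y).
Proof. intros Hx Hy k Hk. destruct (Hx k Hk) as [a Ha]. destruct (Hy k Hk) as [b Hb].
  exists (a ⊕ b). rewrite nmulD, Ha, Hb; auto. Qed.
Lemma div_opp x : divisibleM M x -> divisibleM M (⊖ x).
Proof. intros Hx k Hk. destruct (Hx k Hk) as [a Ha]. exists (⊖ a). rewrite nmulN, Ha; auto. Qed.
Lemma div_zmul z x : divisibleM M x -> divisibleM M (zmul M z x).
Proof. intros Hx k Hk. destruct (Hx k Hk) as [a Ha]. exists (zmul M z a).
  rewrite <- zmul_of_nat, zmul_comm, zmul_of_nat, Ha; auto. Qed.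
Lemma div_lin L f : (forall i, divisibleM M (f i)) -> divisibleM M (lin L f).
Proof. intro Hf. induction L; simpl. apply div_zero. apply div_add; auto. apply div_zmul; auto. Qed.
Lemma div_solve w n : divisibleM M w -> n <> 0%Z ->
  exists e, divisibleM M e /\ zmul M n e = w.
Proof.
  intros Hw Hn. assert (Hk : (1 <= Z.abs_nat n)%nat) by lia.
  destruct (Hw _ Hk) as [y Hy].
  assert (Dy : divisibleM M y).
  { intros j Hj. destruct (Hw (Z.abs_nat n * j)%nat) as [w' Hw']. nia.
    exists w'. apply (nmul_cancel (Z.abs_nat n)); auto. rewrite <- nmul_mult, Hw', Hy; auto. }
  destruct n as [|p|p]; [congruence| |].
  - exists y. split; auto.
  - exists (⊖ y). split. apply div_opp; auto. simpl. rewrite nmulN, oppK. auto.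
Qed.

Section HSec.
Variable Hs : M -> Prop.
Hypothesis H0 : Hs O0.
Hypothesis Hadd : forall x y, Hs x -> Hs y -> Hs (x ⊕ y).
Hypothesis Hopp : forall x, Hs x -> Hs (⊖ x).
Hypothesis Hconv : forall x y, le (absM M x) (absM M y) -> Hs y -> Hs x.

Lemma H_zmul z x : Hs x -> Hs (zmul M z x).
Proof. intro Hx. induction z using Z.peano_ind.
  - apply H0.
  - rewrite zmul_succ; auto.
  - rewrite zmul_pred; auto. Qed.
Lemma H_lin L f : (forall i, Hs (f i)) -> Hs (lin L f).
Proof. intro Hf. induction L; simpl; auto. apply Hadd; auto. apply H_zmul; auto. Qed.
Lemma H_sub x y : Hs (x ⊕ y) -> Hs y -> Hs x.
Proof. intros H1 H2. replace x with (x ⊕ y ⊕ ⊖ y) by apply addKr. auto. Qed.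

Lemma lt_sub a b : lt a b <-> lt (a ⊕ ⊖ b) O0.
Proof. split; intro Q.
  - apply (lt_addr _ _ (⊖ b)) in Q. rewrite addN in Q; auto.
  - apply (lt_addr _ _ b) in Q. rewrite addA, addNl, add0, add0l in Q; auto. Qed.
Lemma key_lt w e : ~ Hs w -> Hs e -> lt w O0 -> lt (w ⊕ e) O0.
Proof. intros Nw He Hw.
  destruct (le_total (absM M w) (absM M e)) as [Q|Q].
  { exfalso; apply Nw. apply (Hconv w e); auto. }
  rewrite (abs_neg w) in Q by auto.
  assert (Q2 : lt e (⊖ w)) by (apply le_lt_trans with (absM M e); auto; apply le_abs).
  apply (lt_addr _ _ w) in Q2. rewrite addNl, addC in Q2. auto. Qed.

Definition Rel (env env' : nat -> M) : Prop :=
  (forall i, divisibleM M (env' i ⊕ ⊖ env i)) /\ (forall i, Hs (env' i ⊕ ⊖ env i)) /\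
  forall L, lin L (fun i => env' i ⊕ ⊖ env i) = O0 \/ ~ Hs (lin L env).

Lemma env_decomp (env env' : nat -> M) i : env' i = env i ⊕ (env' i ⊕ ⊖ env i).
Proof. rewrite addCA, addN, add0; auto. Qed.
Lemma lin_decomp L (env env' : nat -> M) :
  lin L env' = lin L env ⊕ lin L (fun i => env' i ⊕ ⊖ env i).
Proof. rewrite <- lin_envD. apply lin_ext. intro; apply env_decomp. Qed.

Lemma Rel_sym env env' : Rel env env' -> Rel env' env.
Proof.
  intros [D [HH C]].
  assert (E : forall i, env i ⊕ ⊖ env' i = ⊖ (env' i ⊕ ⊖ env i)).
  { intro i. rewrite oppD, oppK, addC; auto. }
  split; [|split].
  - intro i. rewrite E. apply div_opp; auto.
  - intro i. rewrite E. apply Hopp; auto.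
  - intro L. rewrite (lin_ext L _ _ E), lin_envN.
    destruct (C L) as [C1|C1].
    + left. rewrite C1, opp0; auto.
    + right. intro HL. apply C1. rewrite (lin_decomp L env env') in HL.
      apply (H_sub _ _ HL). apply H_lin; auto.
Qed.

Lemma Rel_forth env env' v u : Rel env env' -> exists u', Rel (upd M env v u) (upd M env' v u').
Proof.
  intros [D [HH C]].
  set (δ := fun i => env' i ⊕ ⊖ env i).
  destruct (classic (exists L, coefv v L <> 0%Z /\ Hs (lin L (upd M env v u)))) as [[L0f [Hn0 Hs0]]|NB].
  - set (n0 := coefv v L0f) in *. set (L0 := dropv v L0f).
    destruct (div_solve (⊖ lin L0 δ) n0) as [e [De He]]; auto.
    { apply div_opp, div_lin. exact D. }
    exists (u ⊕ e).
    assert (Ed : forall i, upd M env' v (u ⊕ e) i ⊕ ⊖ upd M env v u i = upd M δ v e i).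
    { intro i. unfold upd, δ. destruct (Nat.eqb i v). rewrite addC, addKl; auto. auto. }
    assert (HL0 : Hs (lin L0 δ)) by (apply H_lin; exact HH).
    split; [|split].
    + intro i. rewrite Ed. unfold upd. destruct (Nat.eqb i v); auto. apply D.
    + intro i. rewrite Ed. unfold upd. destruct (Nat.eqb i v); [|apply HH].
      apply (Hconv e (zmul M n0 e)). apply le_abs_zmul; auto. rewrite He. auto.
    + intro L. rewrite (lin_ext L _ _ Ed), !lin_upd.
      set (β := coefv v L). set (L' := dropv v L).
      destruct (Z.eq_dec β 0) as [Hb|Hb].
      * rewrite Hb, zmul0, add0. destruct (C L') as [C1|C1].
        left; auto. right. rewrite zmul0, add0; auto.
      * set (L2 := scaleL n0 L' ++ scaleL (- β) L0).
        destruct (C L2) as [C1|C1].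
        -- left. apply (zmul_torsion n0); auto.
           rewrite <- C1. unfold L2. fold δ. rewrite lin_app, !lin_scale, zmulDr.
           rewrite zmul_comm, He, zmulNr, zmulNl. auto.
        -- right. intro HV. apply C1. unfold L2. rewrite lin_app, !lin_scale.
           rewrite lin_upd in Hs0. fold L0 n0 in Hs0.
           apply (H_sub _ (zmul M β (lin L0 env ⊕ zmul M n0 u))).
           ++ replace (zmul M n0 (lin L' env) ⊕ zmul M (- β) (lin L0 env) ⊕
                zmul M β (lin L0 env ⊕ zmul M n0 u)) with
                (zmul M n0 (lin L' env ⊕ zmul M β u)).
              apply H_zmul; auto.
              rewrite !zmulDr, zmulNl, (zmul_comm n0 β u).
              rewrite (addA (zmul M n0 (lin L' env))), addKl. auto.
           ++ apply H_zmul; auto.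
  - exists u.
    assert (Ed : forall i, upd M env' v u i ⊕ ⊖ upd M env v u i = upd M δ v O0 i).
    { intro i. unfold upd, δ. destruct (Nat.eqb i v). apply addN. auto. }
    split; [|split].
    + intro i. rewrite Ed. unfold upd. destruct (Nat.eqb i v); auto. apply div_zero. apply D.
    + intro i. rewrite Ed. unfold upd. destruct (Nat.eqb i v); auto. apply HH.
    + intro L. rewrite (lin_ext L _ _ Ed).
      destruct (Z.eq_dec (coefv v L) 0) as [Hb|Hb].
      * rewrite !lin_upd, Hb, !zmul0, !add0. apply C.
      * right. intro HV. apply NB. exists L. auto.
Qed.

Lemma Rel_sat phi : forall env env', Rel env env' -> (sat M env phi <-> sat M env' phi).
Proof.
  induction phi; intros env env' R.
  - simpl. rewrite !eval_lin.
    pose proof R as R'. destruct R as [D [HH C]].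
    destruct (C (tlin t ++ scaleL (-1) (tlin t0))) as [C1|C1].
    + rewrite lin_app, lin_scale in C1.
      rewrite (lin_decomp (tlin t) env env'), (lin_decomp (tlin t0) env env').
      assert (E : lin (tlin t) (fun i => env' i ⊕ ⊖ env i) = lin (tlin t0) (fun i => env' i ⊕ ⊖ env i)).
      { rewrite zmul_m1 in C1. apply subr_eq0; auto. }
      rewrite E. split; intro Q. rewrite Q; auto. apply add_cancel in Q; auto.
    + rewrite lin_app, lin_scale, zmul_m1 in C1.
      split; intro Q; exfalso; apply C1.
      * rewrite Q, addN; auto.
      * rewrite (lin_decomp (tlin t) env env'), (lin_decomp (tlin t0) env env') in Q.
        apply (H_sub _ (lin (tlin t) (fun i => env' i ⊕ ⊖ env i) ⊕ ⊖ lin (tlin t0) (fun i => env' i ⊕ ⊖ env i))).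
        -- replace (lin (tlin t) env ⊕ ⊖ lin (tlin t0) env ⊕
             (lin (tlin t) (fun i => env' i ⊕ ⊖ env i) ⊕ ⊖ lin (tlin t0) (fun i => env' i ⊕ ⊖ env i)))
           with ((lin (tlin t) env ⊕ lin (tlin t) (fun i => env' i ⊕ ⊖ env i)) ⊕
                 ⊖ (lin (tlin t0) env ⊕ lin (tlin t0) (fun i => env' i ⊕ ⊖ env i))).
           rewrite Q, addN; auto.
           rewrite oppD, addACA; auto.
        -- apply Hadd; [|apply Hopp]; apply H_lin; auto.
  - simpl. rewrite !eval_lin.
    destruct R as [D [HH C]].
    rewrite (lin_decomp (tlin t) env env'), (lin_decomp (tlin t0) env env').
    set (X := lin (tlin t) env). set (Y := lin (tlin t0) env).
    set (dX := lin (tlin t) (fun i => env' i ⊕ ⊖ env i)).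
    set (dY := lin (tlin t0) (fun i => env' i ⊕ ⊖ env i)).
    rewrite (lt_sub X Y), (lt_sub (X ⊕ dX) (Y ⊕ dY)).
    rewrite oppD, addACA.
    assert (He : Hs (dX ⊕ ⊖ dY)) by (apply Hadd; [|apply Hopp]; apply H_lin; auto).
    destruct (C (tlin t ++ scaleL (-1) (tlin t0))) as [C1|C1];
      rewrite lin_app, lin_scale, zmul_m1 in C1.
    + fold dX dY in C1. rewrite C1, add0. tauto.
    + fold X Y in C1. split; intro Q.
      * apply key_lt; auto.
      * replace (X ⊕ ⊖ Y) with (X ⊕ ⊖ Y ⊕ (dX ⊕ ⊖ dY) ⊕ ⊖ (dX ⊕ ⊖ dY)) by apply addKr.
        apply key_lt; auto. intro HW. apply C1. apply (H_sub _ _ HW); auto.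
  - simpl. rewrite (IHphi env env' R). tauto.
  - simpl. rewrite (IHphi1 env env' R), (IHphi2 env env' R). tauto.
  - simpl. split.
    + intros [a Ha]. destruct (Rel_forth env env' n a R) as [a' Ra]. exists a'.
      apply (IHphi _ _ Ra); auto.
    + intros [a Ha]. destruct (Rel_forth env' env n a (Rel_sym _ _ R)) as [a' Ra]. exists a'.
      apply (IHphi _ _ (Rel_sym _ _ Ra)); auto.
Qed.
End HSec.

Lemma H_lincomb (Hs : M -> Prop) (H0 : Hs O0)
  (Hadd : forall x y, Hs x -> Hs y -> Hs (x ⊕ y)) (Hopp : forall x, Hs x -> Hs (⊖ x)) m l :
  (forall x, In x l -> Hs x) -> Hs (lincomb M m l).
Proof. revert l; induction m; intros l Hl; destruct l; simpl; auto.
  apply Hadd. apply (H_zmul Hs); auto; apply Hl; simpl; auto. apply IHm; intros; apply Hl; simpl; auto. Qed.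

Definition inHB (B : M) (z : M) : Prop := exists k, le (absM M z) (nmul M k B).
Lemma inHB_0 B : inHB B O0.
Proof. exists 0%nat. simpl. rewrite abs_pos; apply le_refl. Qed.
Lemma inHB_add B x y : inHB B x -> inHB B y -> inHB B (x ⊕ y).
Proof. intros [k1 H1] [k2 H2]. exists (k1 + k2)%nat. rewrite nmul_plus.
  eapply le_trans. apply abs_triangle. apply le_add; auto. Qed.
Lemma inHB_opp B x : inHB B x -> inHB B (⊖ x).
Proof. intros [k H1]. exists k. rewrite abs_opp; auto. Qed.
Lemma inHB_conv B x y : le (absM M x) (absM M y) -> inHB B y -> inHB B x.
Proof. intros Q [k H1]. exists k. eapply le_trans; eauto. Qed.
Lemma inHB_incl B B' j z : le B (nmul M j B') -> inHB B z -> inHB B' z.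
Proof. intros Q [k H1]. exists (k * j)%nat. rewrite nmul_mult. eapply le_trans; eauto.
  apply nmul_mono; auto. Qed.

Hypothesis lt01 : sltb M O0 (sone M) = true.
Definition Bof (b : M) := maxM M (absM M b) (sone M).
Lemma le_maxl x y : le x (maxM M x y).
Proof. unfold maxM. destruct (sltb M x y) eqn:E. apply lt_le; auto. apply le_refl. Qed.
Lemma le_maxr x y : le y (maxM M x y).
Proof. unfold maxM. destruct (sltb M x y) eqn:E. apply le_refl. auto. Qed.
Lemma Bof_pos b : lt O0 (Bof b).
Proof. eapply lt_le_trans. apply lt01. apply le_maxr. Qed.
Lemma Bof_ge0 b : le O0 (Bof b).
Proof. apply lt_le, Bof_pos. Qed.
Lemma Bof_abs b : le (absM M b) (Bof b).
Proof. apply le_maxl. Qed.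

Lemma Sigma_iff c b : Sigma M c b <-> forall m, length m = length c ->
   (exists z, In z m /\ z <> 0%Z) -> ~ inHB (Bof b) (lincomb M m c).
Proof. split.
  - intros Sg m Hm Hz [k Hk]. specialize (Sg m Hm Hz (S k) ltac:(lia)).
    fold (Bof b) in Sg. simpl in Sg.
    assert (Q : lt (nmul M k (Bof b)) (nmul M k (Bof b) ⊕ Bof b)).
    { pattern (nmul M k (Bof b)) at 1. rewrite <- add0. apply lt_addl. apply Bof_pos. }
    pose proof (lt_trans _ _ _ Q Sg). pose proof (lt_le_trans _ _ _ H Hk). congruence.
  - intros Sg m Hm Hz k Hk. specialize (Sg m Hm Hz). fold (Bof b).
    destruct (sltb M (nmul M k (Bof b)) (absM M (lincomb M m c))) eqn:E; auto.
    exfalso. apply Sg. exists k. auto. Qed.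

Lemma le_addpos x y : le O0 y -> le x (x ⊕ y).
Proof. intro H. apply le_trans with (x ⊕ O0). rewrite add0; apply le_refl. apply le_addl; auto. Qed.

Definition sumabs (l : list M) := fold_right (fun x acc => absM M x ⊕ acc) O0 l.
Lemma sumabs_ge0 l : le O0 (sumabs l).
Proof. induction l; simpl. apply le_refl. rewrite <- (add0 O0). apply le_add; auto. apply abs_ge0. Qed.
Lemma sumabs_in l x : In x l -> le (absM M x) (sumabs l).
Proof. induction l; simpl. tauto. intros [<-|Hx]. apply le_addpos, sumabs_ge0.
  eapply le_trans. apply IHl; auto. rewrite addC. apply le_addpos, abs_ge0. Qed.

Lemma nth_default_P (P : M -> Prop) (l : list M) i : (forall x, In x l -> P x) -> P O0 -> P (nth i l O0).
Proof. intros H1 H2. destruct (Nat.lt_ge_cases i (length l)). apply H1, nth_In; auto.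
  rewrite nth_overflow; auto. Qed.

Lemma nth_addv (a b : list M) i : length a = length b ->
  nth i (addv M a b) O0 = nth i a O0 ⊕ nth i b O0.
Proof. revert b i; induction a; intros b i Hl; destruct b; simpl in *; try discriminate.
  - destruct i; simpl; rewrite add0; auto.
  - destruct i; simpl; auto. apply IHa. lia. Qed.
Lemma length_addv (a b : list M) : length a = length b -> length (addv M a b) = length a.
Proof. intro H. unfold addv. rewrite length_map, length_combine, H. lia. Qed.
Lemma nth_map_opp (l : list M) i : nth i (map (sopp M) l) O0 = ⊖ nth i l O0.
Proof. revert i; induction l; intro i; destruct i; simpl; auto; rewrite opp0; auto. Qed.

Lemma lincomb_addv m (a b : list M) : length a = length b ->
  lincomb M m (addv M a b) = lincomb M m a ⊕ lincomb M m b.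
Proof. revert m b; induction a as [|x a IHa]; intros m b Hl; destruct b as [|y b]; simpl in Hl; try discriminate.
  - destruct m; simpl; rewrite add0; auto.
  - change (addv M (x :: a) (y :: b)) with ((x ⊕ y) :: addv M a b).
    destruct m as [|z m]. simpl. rewrite add0; auto.
    cbn [lincomb]. rewrite zmulDr, IHa by lia. apply addACA. Qed.
Lemma lincomb_zero m (l : list M) : (forall z, In z m -> z = 0%Z) -> lincomb M m l = O0.
Proof. revert l; induction m; intros l H; destruct l; simpl; auto.
  rewrite (H a) by (simpl; auto). rewrite zmul0, add0l. apply IHm. intros; apply H; simpl; auto. Qed.

Lemma lincomb_seq_add (l : list M) k (g h : nat -> Z) :
  lincomb M (map (fun i => (g i + h i)%Z) (seq k (length l))) l =
  lincomb M (map g (seq k (length l))) l ⊕ lincomb M (map h (seq k (length l))) l.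
Proof. revert k; induction l; intro k; simpl. rewrite add0; auto.
  rewrite zmulDl, IHl. apply addACA. Qed.
Lemma lincomb_seq_zero (l : list M) k :
  lincomb M (map (fun _ => 0%Z) (seq k (length l))) l = O0.
Proof. apply lincomb_zero. intros z Hz. apply in_map_iff in Hz. destruct Hz as [? [? _]]; auto. Qed.
Lemma lincomb_seq_single (l : list M) k j z :
  lincomb M (map (fun i => if Nat.eqb j i then z else 0%Z) (seq k (length l))) l =
  if Nat.leb k j then zmul M z (nth (j - k) l O0) else O0.
Proof. revert k; induction l; intro k; simpl.
  - destruct (Nat.leb k j); auto. destruct (j - k)%nat; symmetry; apply zmul_r0.
  - rewrite IHl. destruct (Nat.eqb j k) eqn:E.
    + apply Nat.eqb_eq in E; subst. rewrite Nat.leb_refl, Nat.sub_diag.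
      replace (Nat.leb (S k) k) with false by (symmetry; apply Nat.leb_gt; lia). rewrite add0; auto.
    + apply Nat.eqb_neq in E. rewrite zmul0, add0l.
      destruct (Nat.leb (S k) j) eqn:E1.
      * apply Nat.leb_le in E1. replace (Nat.leb k j) with true by (symmetry; apply Nat.leb_le; lia).
        replace (j - k)%nat with (S (j - S k)) by lia. auto.
      * apply Nat.leb_gt in E1. replace (Nat.leb k j) with false by (symmetry; apply Nat.leb_gt; lia). auto.
Qed.

Lemma lin_vec (l : list M) L :
  lin L (env_of M l) = lincomb M (map (fun i => coefv i L) (seq 0 (length l))) l.
Proof. induction L as [|[j z] L IH]; simpl.
  - symmetry. apply lincomb_seq_zero.
  - rewrite IH.
    rewrite (map_ext (fun i => if Nat.eqb j i then (z + coefv i L)%Z else coefv i L)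
       (fun i => ((if Nat.eqb j i then z else 0%Z) + coefv i L)%Z)).
    + rewrite lincomb_seq_add, lincomb_seq_single. simpl. rewrite Nat.sub_0_r. auto.
    + intro i. destruct (Nat.eqb j i); auto.
Qed.

Lemma eval_tmulS f k t : eval M f (tmulS k t) = nmul M (S k) (eval M f t).
Proof. induction k; simpl. rewrite add0l; auto. simpl in IHk. rewrite IHk. auto. Qed.

Lemma realize_div (HT : models_ThZ M) r p c : entails_divpow r p -> realizes M p c ->
  length c = r -> divpow M r c.
Proof. intros Hd Hr Hl. split; auto. apply Forall_forall. intros x Hx.
  apply (In_nth _ _ O0) in Hx. destruct Hx as [i [Hi <-]].
  intros k Hk. destruct k. lia.
  pose proof (Hd i k ltac:(lia) M HT (env_of M c) Hr) as Q. simpl in Q.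
  destruct Q as [y Q]. exists y. rewrite eval_tmulS in Q. simpl in Q. unfold upd in Q.
  rewrite Nat.eqb_refl in Q. replace (Nat.eqb i (S i)) with false in Q by (symmetry; apply Nat.eqb_neq; lia).
  exact Q. Qed.

Lemma core (HT : models_ThZ M) r n G mul f :
  definable_group M n G mul ->
  tdef_morphism M r n G mul f ->
  (exists (t : list M) (p : form -> Prop),
      inX M r p /\ entails_divpow r p /\
      (forall a a', length a = r -> realizes M p a -> Sigma_t M a t ->
                    length a' = r -> realizes M p a' -> Sigma_t M a' t ->
                    f a = f a' -> a = a')) ->
  forall a a', divpow M r a -> divpow M r a' -> f a = f a' -> a = a'.
Proof.
  intros [_ [_ [Gmul [Gassoc [e [Ge [Eid Einv]]]]]]] [Fg [Fadd _]]
    [t [p [[_ HX] [Hdiv Hinj]]]] a a' Da Da' Hf.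
  pose proof Da as [La Fa]. pose proof Da' as [La' Fa'].
  rewrite Forall_forall in Fa, Fa'.
  set (d := addv M a (map (sopp M) a')).
  assert (Ld : length d = r) by (unfold d; rewrite length_addv; rewrite ?length_map; lia).
  assert (Nd : forall i, nth i d O0 = nth i a O0 ⊕ ⊖ nth i a' O0).
  { intro i. unfold d. rewrite nth_addv by (rewrite length_map; lia). rewrite nth_map_opp; auto. }
  assert (Divd : forall x, In x d -> divisibleM M x).
  { intros x Hx. apply (In_nth _ _ O0) in Hx. destruct Hx as [i [_ <-]]. rewrite Nd.
    apply div_add; [|apply div_opp]; apply nth_default_P; auto; apply div_zero. }
  assert (Dd : divpow M r d) by (split; auto; apply Forall_forall; auto).
  assert (Ea : addv M a' d = a).
  { apply (nth_ext _ _ O0 O0). rewrite length_addv; lia.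
    intros i _. rewrite nth_addv by lia. rewrite Nd, addCA, addN, add0. auto. }
  assert (Hfd : f d = e).
  { pose proof (Fadd a' d Da' Dd) as Q. rewrite Ea, Hf in Q.
    destruct (Einv (f a') (Fg a' Da')) as [y [Gy [_ Ey]]].
    rewrite <- (proj1 (Eid (f d) (Fg d Dd))), <- Ey, Gassoc; auto.
    rewrite <- Q. auto. }
  set (S0 := sumabs d).
  set (t' := S0 :: map (fun b => Bof b ⊕ Bof S0) t).
  destruct (HX t') as [c [Lc [Rc Sc]]].
  assert (Dc : divpow M r c) by (apply (realize_div HT r p c); auto).
  set (c' := addv M c d).
  assert (Lc' : length c' = r) by (unfold c'; rewrite length_addv; lia).
  assert (HS0 : Sigma M c S0) by (apply Sc; simpl; auto).
  assert (HE : forall b, In b t -> Sigma M c (Bof b ⊕ Bof S0)).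
  { intros b Hb. apply Sc. simpl. right. apply in_map_iff. eauto. }
  assert (InclS : forall z, inHB (Bof S0) z -> forall b, inHB (Bof (Bof b ⊕ Bof S0)) z).
  { intros z Hz b. apply (inHB_incl (Bof S0) _ 1); auto. rewrite nmul1.
    eapply le_trans; [|apply Bof_abs]. rewrite abs_pos.
    rewrite addC. apply le_addpos, Bof_ge0.
    rewrite <- (add0 O0). apply le_add; apply Bof_ge0. }
  assert (Inclb : forall z b, inHB (Bof b) z -> inHB (Bof (Bof b ⊕ Bof S0)) z).
  { intros z b Hz. apply (inHB_incl (Bof b) _ 1); auto. rewrite nmul1.
    eapply le_trans; [|apply Bof_abs]. rewrite abs_pos.
    apply le_addpos, Bof_ge0.
    rewrite <- (add0 O0). apply le_add; apply Bof_ge0. }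
  assert (Hdi : forall x, In x d -> inHB (Bof S0) x).
  { intros x Hx. exists 1%nat. rewrite nmul1. eapply le_trans.
    apply sumabs_in; eauto. fold S0. eapply le_trans; [|apply Bof_abs].
    apply le_abs. }
  assert (Ed : forall i, env_of M c' i ⊕ ⊖ env_of M c i = env_of M d i).
  { intro i. unfold env_of, c'. rewrite nth_addv by lia. rewrite (addC (nth i c O0)), addKr. auto. }
  assert (R : Rel (inHB (Bof S0)) (env_of M c) (env_of M c')).
  { split; [|split].
    - intro i. rewrite Ed. unfold env_of. apply nth_default_P; auto. apply div_zero.
    - intro i. rewrite Ed. unfold env_of. apply nth_default_P; auto. apply inHB_0.
    - intro L. rewrite (lin_ext L _ _ Ed), !lin_vec. rewrite Ld, Lc.
      set (m := map (fun i => coefv i L) (seq 0 r)).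
      destruct (classic (exists z, In z m /\ z <> 0%Z)) as [Hz|Hz].
      + right. apply (proj1 (Sigma_iff c S0) HS0); auto.
        unfold m. rewrite length_map, length_seq; auto.
      + left. apply lincomb_zero. intros z Hzm. apply NNPP. intro. apply Hz; eauto. }
  assert (Rc' : realizes M p c').
  { intros phi Hphi. apply (proj1 (Rel_sat (inHB (Bof S0)) (inHB_0 _) (inHB_add _)
        (inHB_opp _) (inHB_conv _) phi _ _ R)). apply Rc; auto. }
  assert (Sct : Sigma_t M c t).
  { intros b Hb. apply Sigma_iff. intros m Hm Hz Q. apply (proj1 (Sigma_iff _ _) (HE b Hb) m Hm Hz).
    apply Inclb; auto. }
  assert (Sct' : Sigma_t M c' t).
  { intros b Hb. apply Sigma_iff. intros m Hm Hz Q.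
    apply (proj1 (Sigma_iff _ _) (HE b Hb) m ltac:(lia) Hz).
    unfold c' in Q. rewrite lincomb_addv in Q by lia.
    apply (H_sub (inHB (Bof (Bof b ⊕ Bof S0))) (inHB_add _) (inHB_opp _) _ (lincomb M m d)).
    apply Inclb; auto. apply InclS. apply (H_lincomb (inHB (Bof S0))); auto.
    apply inHB_0. apply inHB_add. apply inHB_opp. }
  assert (Dc' : divpow M r c') by (apply (realize_div HT r p c'); auto).
  assert (Fc : f c' = f c).
  { unfold c'. rewrite (Fadd c d Dc Dd), Hfd. apply (Eid (f c) (Fg c Dc)). }
  assert (Ecc : c = c') by (apply Hinj; auto).
  apply (nth_ext _ _ O0 O0). lia. intros i Hi.
  assert (Z0 : nth i d O0 = O0).
  { assert (Q : nth i c O0 = nth i c' O0) by (rewrite <- Ecc; auto).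
    unfold c' in Q. rewrite nth_addv in Q by lia.
    apply (add_cancel _ _ (nth i c O0)). rewrite add0l, addC. auto. }
  rewrite Nd in Z0. apply subr_eq0; auto.
Qed.

End Alg.

Definition fall (n : nat) (phi : form) := fneg (fex n (fneg phi)).
Definition fimp (a b : form) := fneg (fand a (fneg b)).

Lemma sat_fall_intro (N : Str) env n phi : (forall a, sat N (upd N env n a) phi) -> sat N env (fall n phi).
Proof. unfold fall; simpl. intros H [a Ha]. apply Ha, H. Qed.
Lemma sat_fall_elim (N : Str) env n phi : sat N env (fall n phi) -> forall a, sat N (upd N env n a) phi.
Proof. unfold fall; simpl. intros H a. apply NNPP. intro Q. apply H. eauto. Qed.
Lemma sat_imp_intro (N : Str) env a b : (sat N env a -> sat N env b) -> sat N env (fimp a b).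
Proof. unfold fimp; simpl. tauto. Qed.
Lemma sat_imp_elim (N : Str) env a b : sat N env (fimp a b) -> sat N env a -> sat N env b.
Proof. unfold fimp; simpl. intros H Ha. apply NNPP. tauto. Qed.

Ltac sent := unfold sentence, fall, fimp; intros v Hv; simpl in Hv; lia.

Section Transfer.
Variable M : Str.
Hypothesis HT : models_ThZ M.
Local Notation v0 := (tvar 0). Local Notation v1 := (tvar 1). Local Notation v2 := (tvar 2).

Lemma tr_addA : forall x y z : M, sadd M (sadd M x y) z = sadd M x (sadd M y z).
Proof.
  pose (phi := fall 0 (fall 1 (fall 2 (feq (tadd (tadd v0 v1) v2) (tadd v0 (tadd v1 v2)))))).
  assert (Q : sat M (fun _ => szero M) phi).
  { apply HT. unfold phi; sent.
    unfold phi. repeat (apply sat_fall_intro; intro). simpl. lia. }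
  intros x y z. unfold phi in Q.
  pose proof (sat_fall_elim _ _ _ _ (sat_fall_elim _ _ _ _ (sat_fall_elim _ _ _ _ Q x) y) z) as R.
  simpl in R. unfold upd in R; simpl in R. exact R.
Qed.
Lemma tr_addC : forall x y : M, sadd M x y = sadd M y x.
Proof.
  pose (phi := fall 0 (fall 1 (feq (tadd v0 v1) (tadd v1 v0)))).
  assert (Q : sat M (fun _ => szero M) phi).
  { apply HT. unfold phi; sent.
    unfold phi. repeat (apply sat_fall_intro; intro). simpl. lia. }
  intros x y. pose proof (sat_fall_elim _ _ _ _ (sat_fall_elim _ _ _ _ Q x) y) as R.
  simpl in R. unfold upd in R; simpl in R. exact R.
Qed.
Lemma tr_irr : forall x : M, sltb M x x = false.
Proof.
  pose (phi := fall 0 (fneg (flt v0 v0))).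
  assert (Q : sat M (fun _ => szero M) phi).
  { apply HT. unfold phi; sent.
    unfold phi. repeat (apply sat_fall_intro; intro). simpl. lia. }
  intros x. pose proof (sat_fall_elim _ _ _ _ Q x) as R.
  simpl in R. unfold upd in R; simpl in R. destruct (sltb M x x); congruence.
Qed.
Lemma tr_trans : forall x y z : M, sltb M x y = true -> sltb M y z = true -> sltb M x z = true.
Proof.
  pose (phi := fall 0 (fall 1 (fall 2 (fimp (fand (flt v0 v1) (flt v1 v2)) (flt v0 v2))))).
  assert (Q : sat M (fun _ => szero M) phi).
  { apply HT. unfold phi; sent.
    unfold phi. repeat (apply sat_fall_intro; intro). apply sat_imp_intro. simpl.
    rewrite !Z.ltb_lt. lia. }
  intros x y z H1 H2.
  pose proof (sat_fall_elim _ _ _ _ (sat_fall_elim _ _ _ _ (sat_fall_elim _ _ _ _ Q x) y) z) as R.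
  pose proof (sat_imp_elim _ _ _ _ R) as R2. simpl in R2. unfold upd in R2; simpl in R2.
  apply R2. auto.
Qed.
Lemma tr_total : forall x y : M, sltb M x y = true \/ x = y \/ sltb M y x = true.
Proof.
  pose (phi := fall 0 (fall 1 (fneg (fand (fneg (flt v0 v1)) (fand (fneg (feq v0 v1)) (fneg (flt v1 v0))))))).
  assert (Q : sat M (fun _ => szero M) phi).
  { apply HT. unfold phi; sent.
    unfold phi. repeat (apply sat_fall_intro; intro). simpl. rewrite !Z.ltb_lt. lia. }
  intros x y. pose proof (sat_fall_elim _ _ _ _ (sat_fall_elim _ _ _ _ Q x) y) as R.
  simpl in R. unfold upd in R; simpl in R. destruct (sltb M x y); auto. destruct (sltb M y x); auto.
  destruct (classic (x = y)); auto. exfalso; apply R; auto.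
Qed.
Lemma tr_ltadd : forall x y z : M, sltb M x y = true -> sltb M (sadd M x z) (sadd M y z) = true.
Proof.
  pose (phi := fall 0 (fall 1 (fall 2 (fimp (flt v0 v1) (flt (tadd v0 v2) (tadd v1 v2)))))).
  assert (Q : sat M (fun _ => szero M) phi).
  { apply HT. unfold phi; sent.
    unfold phi. repeat (apply sat_fall_intro; intro). apply sat_imp_intro. simpl.
    rewrite !Z.ltb_lt. lia. }
  intros x y z H1.
  pose proof (sat_fall_elim _ _ _ _ (sat_fall_elim _ _ _ _ (sat_fall_elim _ _ _ _ Q x) y) z) as R.
  pose proof (sat_imp_elim _ _ _ _ R) as R2. simpl in R2. unfold upd in R2; simpl in R2.
  apply R2. auto.
Qed.
End Transfer.

Theorem mainTheorem7 (M : Str) (r n : nat) (G : list M -> Prop)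
    (mul : list M -> list M -> list M) (f : list M -> list M) :
  Zgroup M ->
  omega_saturated M ->
  definable_group M n G mul ->
  tdef_morphism M r n G mul f ->
  (exists (t : list M) (p : form -> Prop),
      inX M r p /\ entails_divpow r p /\
      (forall a a', length a = r -> realizes M p a -> Sigma_t M a t ->
                    length a' = r -> realizes M p a' -> Sigma_t M a' t ->
                    f a = f a' -> a = a')) ->
  forall a a', divpow M r a -> divpow M r a' -> f a = f a' -> a = a'.
Proof.
  intros [HT [A0 [AN [L01 _]]]] _.
  apply (core M (tr_addA M HT) (tr_addC M HT) A0 AN (tr_irr M HT) (tr_trans M HT)
    (tr_total M HT) (tr_ltadd M HT) L01 HT).
Qed.
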